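(* Let $n\geq 3$, $p \geq 2$ and $m\geq 1$ be integers, and let $c$ be an $a$-packing coloring of $FSSD_m(K_n \star P_p)$ with $a \leq n+3$. Then $c(u_i)\neq 1$ for all $i\in\{1,\dots,n\}$, and $c(v_{i,g})\neq 1$ for all $i\in\{1,\dots,n\}$ and $g\in\{1,\dots,p\}$.
   Context: All graphs are finite and simple. An $a$-packing coloring of a graph $H$ is a map $c:V(H)\to\{1,\dots,a\}$ such that $c(x)=c(y)=i$ with $x\neq y$ implies $d_H(x,y)>i$. For a positive integer $m$, $FSSD_m(G)$ is obtained from a graph $G$ by replacing each edge $xy$ by a copy of $K_{2,m}$: the edge $xy$ is deleted and $m$ new vertices are added, each adjacent to exactly $x$ and $y$. The neighborhood corona $G\star H$ of graphs $G$ (with vertices $w_1,\dots,w_{n}$) and $H$ consists of one copy of $G$ and $n$ copies $H_1,\dots,H_n$ of $H$ (each retaining the edges of $H$), where every vertex of $H_i$ is additionally joined to every neighbor of $w_i$ in $G$. $K_n$ is the complete graph and $P_p$ the path on $p$ vertices. In $K_n\star P_p$ the vertices of $K_n$ are $u_1,\dots,u_n$ and the vertices of the copy of $P_p$ corresponding to $u_i$ are $v_{i,1},\dots,v_{i,p}$; these same names denote the corresponding (non-subdivided) vertices of $FSSD_m(K_n\star P_p)$. *)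

(* Defs.v *)
From mathcomp Require Import all_boot.
Set Implicit Arguments. Unset Strict Implicit. Unset Printing Implicit Defensive.

(* Simple graphs are given as a finite vertex type with a symmetric,
   irreflexive adjacency relation. *)

Definition K_adj (n : nat) : rel 'I_n := fun i j => i != j.

Definition P_adj (p : nat) : rel 'I_p :=
  fun g h => (g.+1 == h :> nat) || (h.+1 == g :> nat).

(* Neighborhood corona G * H: vertices inl w (copy of G) and inr (i, x)
   (vertex x of the copy H_i attached to w_i). *)
Definition corona_adj (V W : finType) (G : rel V) (H : rel W)
  : rel (V + V * W) :=
  fun x y =>
    match x, y with
    | inl a, inl b => G a b
    | inr (i, a), inr (j, b) => (i == j) && H a b
    | inl a, inr (i, _) => G a i
    | inr (i, _), inl a => G a i
    end.

(* Unordered edges of G, each represented once (by the ordered pair whose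
   first endpoint has smaller rank). *)
Definition fssd_edge (V : finType) (G : rel V) :=
  {e : V * V | G e.1 e.2 && (enum_rank e.1 < enum_rank e.2)%N}.

(* FSSD_m(G): each edge xy replaced by m new vertices (e, k), k : 'I_m,
   each adjacent exactly to x and y. *)
Definition fssd_adj (V : finType) (G : rel V) (m : nat)
  : rel (V + {e : V * V | G e.1 e.2 && (enum_rank e.1 < enum_rank e.2)%N} * 'I_m) :=
  fun x y =>
    match x, y with
    | inl a, inr (e, _) => (a == (val e).1) || (a == (val e).2)
    | inr (e, _), inl a => (a == (val e).1) || (a == (val e).2)
    | _, _ => false
    end.

Definition within (T : Type) (adj : rel T) (k : nat) (x y : T) : Prop :=
  exists s : seq T, [/\ path adj x s, last x s = y & (size s <= k)%N].

Definition packing_coloring (T : eqType) (adj : rel T) (a : nat)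
  (c : T -> nat) : Prop :=
  (forall x, 1 <= c x <= a)%N /\
  (forall x y, x != y -> c x = c y -> ~ within adj (c x) x y).

Definition KP_adj (n p : nat) : rel ('I_n + 'I_n * 'I_p) :=
  @corona_adj 'I_n 'I_p (@K_adj n) (@P_adj p).

(* Main.v *)
Require Import Defs.
From mathcomp Require Import all_boot zify.
Set Implicit Arguments. Unset Strict Implicit. Unset Printing Implicit Defensive.


Lemma within_mono (T : Type) (e : rel T) d d' x y :
  within e d x y -> d <= d' -> within e d' x y.
Proof. by case=> s [P L S] h; exists s; split => //; apply: leq_trans h. Qed.

Lemma within0 (T : Type) (e : rel T) x : within e 0 x x.
Proof. by exists [::]. Qed.

Lemma within_cons (T : Type) (e : rel T) d x y z :
  e x y -> within e d y z -> within e d.+1 x z.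
Proof. by move=> h [s [P L S]]; exists (y :: s); split => //=; rewrite h. Qed.

Lemma within_rcons (T : Type) (e : rel T) d x y z :
  within e d x y -> e y z -> within e d.+1 x z.
Proof.
case=> s [P L S] h; exists (rcons s z); split.
- by rewrite rcons_path P L h.
- by rewrite last_rcons.
- by rewrite size_rcons.
Qed.

Lemma within1 (T : Type) (e : rel T) x y : e x y -> within e 1 x y.
Proof. by move=> h; apply: within_cons h (within0 _ _). Qed.

Lemma count_inj (T : finType) (A : {set T}) (g : T -> nat) lo hi :
  {in A &, injective g} -> (forall x, x \in A -> lo <= g x < hi) ->
  #|A| <= hi - lo.
Proof.
move=> inj hb.
rewrite cardE -(size_map g) -(size_iota lo (hi - lo)).
apply: uniq_leq_size.
  by rewrite map_inj_in_uniq ?enum_uniq // => x y; rewrite !mem_enum; apply: inj.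
move=> z /mapP [x]; rewrite mem_enum => /hb /andP [h1 h2] ->.
by rewrite mem_iota h1 subnKC ?h2 // (leq_trans h1 (ltnW h2)).
Qed.

Definition okc2 (dk rasg : seq nat) (x : nat) : bool :=
  all (fun yd => (yd.1 != x) || (x < yd.2)) (zip rasg dk).

Fixpoint ext2 (cols doms : seq (seq nat)) (rasg : seq nat) : bool :=
  match cols, doms with
  | dk :: cols', domk :: doms' =>
      (fix tryc (l : seq nat) : bool :=
         match l with
         | [::] => false
         | x :: l' => if okc2 dk rasg x then
                        (if ext2 cols' doms' (x :: rasg) then true else tryc l')
                      else tryc l'
         end) domk
  | _, _ => true
  end.

Lemma ext2_cons dk cols' domk doms' rasg :
  ext2 (dk :: cols') (domk :: doms') rasg =
  has (fun x => okc2 dk rasg x && ext2 cols' doms' (x :: rasg)) domk.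
Proof.
rewrite /=; elim: domk => [|x l IH] //=.
by case: (okc2 dk rasg x); case: (ext2 cols' doms' (x :: rasg)).
Qed.

Definition mkcols (tbl : seq (seq nat)) K :=
  [seq [seq nth 0 (nth [::] tbl k) r | r <- rev (iota 0 k)] | k <- iota 0 K].

Lemma ext_sound tbl (dom : nat -> seq nat) K (col : nat -> nat) :
  (forall r, r < K -> col r \in dom r) ->
  (forall r s, r < K -> s < K -> r != s -> col r = col s ->
      col r < nth 0 (nth [::] tbl s) r) ->
  ext2 (mkcols tbl K) [seq dom r | r <- iota 0 K] [::].
Proof.
move=> hd hc.
suff H : forall f t, f + t = K ->
  ext2 (drop t (mkcols tbl K)) (drop t [seq dom r | r <- iota 0 K]) (rev (mkseq col t)).
  by have := H K 0 (addn0 K); rewrite !drop0.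
elim=> [|f IH] t hft.
  rewrite -hft add0n !drop_oversize //= ?size_map ?size_iota //.
have htK : t < K by rewrite -hft addSn ltnS leq_addl.
have e1 : nth [::] (mkcols tbl K) t = [seq nth 0 (nth [::] tbl t) r | r <- rev (iota 0 t)].
  by rewrite /mkcols (nth_map 0) ?size_iota // nth_iota.
have e2 : nth [::] [seq dom r | r <- iota 0 K] t = dom t.
  by rewrite (nth_map 0) ?size_iota // nth_iota.
rewrite (drop_nth [::] (s := mkcols tbl K)) ?size_map ?size_iota // (drop_nth [::] (s := [seq dom r | r <- iota 0 K])) ?size_map ?size_iota // ext2_cons e1 e2.
apply/hasP; exists (col t); first exact: hd.
apply/andP; split.
  apply/allP => -[y d]; rewrite /mkseq -map_rev.
  move=> /nthP => /(_ (0,0)) [q]; rewrite size_zip !size_map size_rev size_iota minnn => hq.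
  rewrite nth_zip ?size_map ?size_rev ?size_iota // !(nth_map 0) ?size_rev ?size_iota //.
  case=> <- <- /=.
  set r := nth 0 (rev (iota 0 t)) q.
  have : r \in rev (iota 0 t) by rewrite /r mem_nth // size_rev size_iota.
  rewrite mem_rev mem_iota add0n => hr.
  case: (eqVneq (col r) (col t)) => [e|//=]; apply/orP; right.
  rewrite -e; apply: hc => //; first exact: ltn_trans htK.
  by rewrite ltn_eqF.
have -> : col t :: rev (mkseq col t) = rev (mkseq col t.+1).
  by rewrite /mkseq -addn1 iotaD map_cat /= rev_cat.
by apply: IH; rewrite addnS -addSn.
Qed.


Section G.
Variables (n p m : nat).
Notation B := ('I_n + 'I_n * 'I_p)%type.
Notation E := {e : B * B | @KP_adj n p e.1 e.2 && (enum_rank e.1 < enum_rank e.2)%N}.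
Notation T := (B + E * 'I_m)%type.
Notation KPa := (@KP_adj n p).
Notation adj := (@fssd_adj B (@KP_adj n p) m).

Lemma KP_sym x y : KPa x y = KPa y x.
Proof.
case: x => [a|[a g]]; case: y => [b|[b h]] //=; rewrite /K_adj /P_adj /=.
- by rewrite eq_sym.
- by rewrite orbC eq_sym.
Qed.

Lemma KP_irr x : KPa x x = false.
Proof.
case: x => [a|[a g]] /=; rewrite /K_adj /P_adj /= ?eqxx //=.
by rewrite orbb; apply/negbTE; rewrite neq_ltn ltnSn orbT.
Qed.

Definition mk (x y : B) (k : 'I_m) : T :=
  match (insub (x, y) : option E) with
  | Some e => inr (e, k)
  | None => match (insub (y, x) : option E) with
            | Some e => inr (e, k)
            | None => inl x end end.

Lemma mk_spec x y k : KPa x y ->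
  exists e : E, mk x y k = inr (e, k) /\ (val e = (x, y) \/ val e = (y, x)).
Proof.
move=> h; rewrite /mk.
case: insubP => [e _ ve|]; first by exists e; split => //; left.
rewrite /= h /= => hxy.
case: insubP => [e _ ve|]; first by exists e; split => //; right.
rewrite /= KP_sym h /=.
have hne : x != y by apply: contraTneq h => ->; rewrite KP_irr.
have : enum_rank x != enum_rank y by apply: contra hne => /eqP/enum_rank_inj ->.
by rewrite neq_ltn (negbTE hxy) /= => ->.
Qed.

Lemma mk_adj1 x y k : KPa x y -> adj (inl x) (mk x y k) /\ adj (mk x y k) (inl x).
Proof.
by case/(mk_spec k) => e [-> [] ve]; rewrite /= ve /= eqxx ?orbT.
Qed.

Lemma mk_adj2 x y k : KPa x y -> adj (inl y) (mk x y k) /\ adj (mk x y k) (inl y).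
Proof.
by case/(mk_spec k) => e [-> [] ve]; rewrite /= ve /= eqxx ?orbT.
Qed.

Lemma mk_inl x y k z : KPa x y -> mk x y k <> inl z.
Proof. by case/(mk_spec k) => e [-> _]. Qed.

Lemma mk_inj x y x' y' k : KPa x y -> KP_adj x' y' -> mk x y k = mk x' y' k ->
  (x = x' /\ y = y') \/ (x = y' /\ y = x').
Proof.
case/(mk_spec k) => e [-> ve]; case/(mk_spec k) => e' [-> ve'] [] /(congr1 val).
by case: ve => ->; case: ve' => -> [-> ->]; auto.
Qed.

Lemma adj_sym (x y : T) : adj x y = adj y x.
Proof. by case: x => [a|[e k]]; case: y => [b|[e' k']]. Qed.

Lemma within_sym d (x y : T) : within adj d x y -> within adj d y x.
Proof.
case=> s [P L S]; exists (rev (belast x s)); split.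
- rewrite -L rev_path; apply: sub_path P => u v /=; by rewrite adj_sym.
- by case: s L {P S} => [|z s] /= <- //; rewrite rev_cons last_rcons.
- by rewrite size_rev size_belast.
Qed.

End G.


Definition bv := (nat * nat)%type.
Definition cv := (bv * bv)%type.
Definition badj (x y : bv) : bool :=
  ((x.1 != y.1) && ((x.2 == 2) || (y.2 == 2))) ||
  [&& x.1 == y.1, x.2 != 2, y.2 != 2 & x.2 != y.2].
Definition validb (K : nat) (b : bv) := (b.1 < K) && (b.2 <= 2).
Definition validc K (x : cv) := [&& validb K x.1, validb K x.2 & (x.1 == x.2) || badj x.1 x.2].
Definition adjC (x y : cv) : bool :=
  [&& x.1 == x.2, y.1 != y.2 & (x.1 == y.1) || (x.1 == y.2)] ||
  [&& y.1 == y.2, x.1 != x.2 & (y.1 == x.1) || (y.1 == x.2)].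
Definition ceq (x y : cv) := (x == y) || ((x.1 == y.2) && (x.2 == y.1)).
Definition d0 : cv := ((0,0),(0,0)).

Definition nbrs (L : seq cv) (t : nat) :=
  [seq u <- iota 0 (size L) | adjC (nth d0 L t) (nth d0 L u)].
Fixpoint rs (L : seq cv) (d r : nat) : seq nat :=
  if d is d'.+1 then let S := rs L d' r in undup (S ++ flatten [seq nbrs L t | t <- S])
  else [:: r].
Definition mktbl (L : seq cv) (K : nat) :=
  mkseq (fun r => let Ls := mkseq (fun d => rs L d r) 8 in
                  mkseq (fun s => find (fun S => s \in S) Ls) (size L)) K.
Definition isUc (x : cv) := (x.1 == x.2) && (x.1.2 == 2).
Definition cdom (L : seq cv) (amax : nat) (r : nat) : seq nat :=
  if r == 0 then [:: 1] else if isUc (nth d0 L r) then iota 2 (amax.-1) else iota 1 amax.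
Definition pwok (L : seq cv) (K : nat) :=
  all (fun r => all (fun s => (r == s) || ~~ ceq (nth d0 L r) (nth d0 L s)) (iota 0 K)) (iota 0 K).
Definition coreok (L : seq cv) (NI K amax : nat) :=
  [&& amax <= 7, all (validc NI) L, K <= size L, nth d0 L 0 == ((0,0),(0,0)), pwok L K
    & ~~ ext2 (mkcols (mktbl L K) K) [seq cdom L amax r | r <- iota 0 K] [::]].

Section Core.
Variables (n p m : nat).
Notation B := ('I_n + 'I_n * 'I_p)%type.
Notation E := {e : B * B | @KP_adj n p e.1 e.2 && (enum_rank e.1 < enum_rank e.2)%N}.
Notation T := (B + E * 'I_m)%type.
Notation KPa := (@KP_adj n p).
Notation adj := (@fssd_adj B (@KP_adj n p) m).
Variables (NI : nat) (ix : nat -> 'I_n) (px : nat -> nat -> 'I_p) (k0 : 'I_m).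
Hypothesis ixinj : forall a b, a < NI -> b < NI -> ix a = ix b -> a = b.
Hypothesis pxne : forall a, a < NI -> px a 0 != px a 1.
Hypothesis pxadj : forall a, a < NI -> P_adj (px a 0) (px a 1).

Definition psi (b : bv) : B := if b.2 == 2 then inl (ix b.1) else inr (ix b.1, px b.1 b.2).
Definition phi (x : cv) : T := if x.1 == x.2 then inl (psi x.1) else mk (psi x.1) (psi x.2) k0.

Lemma psi_adj x y : validb NI x -> validb NI y -> badj x y -> KPa (psi x) (psi y).
Proof.
case: x => a h; case: y => b h'; rewrite /validb /badj /psi /= => /andP [ha hh] /andP [hb hh'].
move: hh hh'; case: h => [|[|[|h]]] //; case: h' => [|[|[|h']]] //= _ _;
  rewrite /K_adj /P_adj ?orbF ?andbF ?andbT ?orbT //=.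
all: rewrite ?orbF.
all: try (by move=> ne; apply: contra ne => /eqP /ixinj -> //).
all: try (by move=> ne; rewrite eq_sym; apply: contra ne => /eqP /ixinj -> //).
- by move=> /eqP eab; subst b; rewrite eqxx /=; have := pxadj ha; rewrite /P_adj.
- by move=> /eqP eab; subst b; rewrite eqxx /=; have := pxadj ha; rewrite /P_adj orbC.
Qed.

Lemma psi_inj x y : validb NI x -> validb NI y -> psi x = psi y -> x = y.
Proof.
case: x => a h; case: y => b h'; rewrite /validb /psi /= => /andP [ha hh] /andP [hb hh'].
case: (h =P 2) => [->|h2]; case: (h' =P 2) => [->|h2'] //.
  by case=> e; rewrite (ixinj ha hb e).
case=> e ep; have eab := ixinj ha hb e; subst b; congr pair.
move: hh hh' h2 h2' ep; case: h => [|[|[|h]]] //; case: h' => [|[|[|h']]] //= _ _ _ _.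
  by move=> ep; move: (pxne ha); rewrite ep eqxx.
by move=> ep; move: (pxne ha); rewrite ep eqxx.
Qed.

Lemma phi_adj x y : validc NI x -> validc NI y -> adjC x y -> adj (phi x) (phi y).
Proof.
case: x => x1 x2; case: y => y1 y2; rewrite /validc /adjC /phi /=.
case/and3P => v1 v2 vx; case/and3P => w1 w2 vy.
case/orP => /and3P [/eqP e ne h].
- rewrite -e eqxx (negbTE ne); rewrite (negbTE ne) /= in vy.
  case/orP: h => /eqP ->.
    by case: (mk_adj1 k0 (psi_adj w1 w2 vy)).
  by case: (mk_adj2 k0 (psi_adj w1 w2 vy)).
- rewrite -e eqxx (negbTE ne); rewrite (negbTE ne) /= in vx.
  case/orP: h => /eqP ->.
    by case: (mk_adj1 k0 (psi_adj v1 v2 vx)).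
  by case: (mk_adj2 k0 (psi_adj v1 v2 vx)).
Qed.

Lemma phi_inj x y : validc NI x -> validc NI y -> phi x = phi y -> ceq x y.
Proof.
case: x => x1 x2; case: y => y1 y2; rewrite /validc /ceq /phi /=.
case/and3P => v1 v2 vx; case/and3P => w1 w2 vy.
case: (x1 =P x2) => [<-|nx]; case: (y1 =P y2) => [<-|ny] /=.
- by case=> /psi_inj -> //; rewrite eqxx.
- by move/eqP/negbTE: ny vy => -> /= vy /esym /(mk_inl (psi_adj w1 w2 vy)).
- by move/eqP/negbTE: nx vx => -> /= vx /(mk_inl (psi_adj v1 v2 vx)).
move/eqP/negbTE: ny vy => -> /= vy; move/eqP/negbTE: nx vx => -> /= vx.
case/(mk_inj (psi_adj v1 v2 vx) (psi_adj w1 w2 vy)) => [[/psi_inj -> // /psi_inj -> //]|[/psi_inj -> // /psi_inj -> //]].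
  by rewrite eqxx.
by rewrite !eqxx orbT.
Qed.

Variable L : seq cv.
Hypothesis Lvalid : all (validc NI) L.

Lemma nth_valid r : r < size L -> validc NI (nth d0 L r).
Proof. by move=> h; apply: (allP Lvalid); rewrite mem_nth. Qed.

Lemma rs_within d r : r < size L -> forall s, s \in rs L d r ->
  s < size L /\ within adj d (phi (nth d0 L r)) (phi (nth d0 L s)).
Proof.
move=> hr; elim: d => [|d IH] s /=.
  by rewrite inE => /eqP ->; split => //; apply: within0.
rewrite mem_undup mem_cat => /orP [/IH [hs hw]|].
  by split => //; apply: within_mono hw _.
case/flattenP => S /mapP [t /IH [ht hw] ->].
rewrite mem_filter mem_iota add0n => /andP [ha hs]; split => //.
apply: within_rcons hw _; apply: phi_adj => //; exact: nth_valid.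
Qed.

Lemma tbl_within K r s : r < K -> r < size L -> s < size L ->
  nth 0 (nth [::] (mktbl L K) r) s < 8 ->
  within adj (nth 0 (nth [::] (mktbl L K) r) s) (phi (nth d0 L r)) (phi (nth d0 L s)).
Proof.
move=> hrK hr hs; rewrite /mktbl nth_mkseq // nth_mkseq //.
set Ls := mkseq _ 8 => h.
have : has (fun S => s \in S) Ls by rewrite has_find size_mkseq.
move/(nth_find [::]); rewrite nth_mkseq //.
by case/rs_within.
Qed.

End Core.

Lemma core_false n p m NI (ix : nat -> 'I_n) (px : nat -> nat -> 'I_p) (k0 : 'I_m)
  (ixinj : forall a b, a < NI -> b < NI -> ix a = ix b -> a = b)
  (pxne : forall a, a < NI -> px a 0 != px a 1)
  (pxadj : forall a, a < NI -> P_adj (px a 0) (px a 1))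
  L K amax (hok : coreok L NI K amax) a (ha : a <= amax)
  (c : ('I_n + 'I_n * 'I_p) + {e : ('I_n + 'I_n * 'I_p) * ('I_n + 'I_n * 'I_p) |
            @KP_adj n p e.1 e.2 && (enum_rank e.1 < enum_rank e.2)%N} * 'I_m -> nat)
  (hc : packing_coloring (@fssd_adj ('I_n + 'I_n * 'I_p)%type (@KP_adj n p) m) a c)
  (hu : forall x : 'I_n, c (inl (inl x)) <> 1)
  (ht : c (inl (inr (ix 0, px 0 0))) = 1) : False.
Proof.
case/and5P: hok => h7 hv hK h0 /andP [hpw hext].
case: hc => hb hp.
have hcol r : r < K -> c (phi ix px k0 (nth d0 L r)) \in cdom L amax r.
  move=> hr; rewrite /cdom.
  case: (r =P 0) => [e|_].
    by subst r; rewrite (eqP h0) /phi /psi /= ht inE.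
  have /andP [b1 b2] := hb (phi ix px k0 (nth d0 L r)).
  case hU: (isUc _).
    have -> : phi ix px k0 (nth d0 L r) = inl (inl (ix (nth d0 L r).1.1)).
      move: hU; rewrite /isUc /phi => /andP [/eqP -> /eqP h2].
      by rewrite eqxx /psi h2 eqxx.
    have hz := hu (ix (nth d0 L r).1.1).
    have b3 : c (inl (inl (ix (nth d0 L r).1.1))) <= amax.
      by apply: leq_trans ha; move: b2; rewrite /phi; case/andP: hU => /eqP -> /eqP h2;
         rewrite eqxx /psi h2 eqxx.
    have /andP [b4 _] := hb (inl (inl (ix (nth d0 L r).1.1))).
    move: hz b3 b4; move: (c _) => z hz b3 b4.
    have h2 : 2 <= z by case: z hz b4 {b3} => [|[|]].
    rewrite mem_iota h2 /=.
    have h2a : 2 <= amax by apply: leq_trans b3.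
    by rewrite -(ltn_predK h2a) addSn add1n ltnS (ltn_predK h2a).
  rewrite mem_iota b1 add1n ltnS; exact: leq_trans ha.
move/negP: hext; apply; apply: ext_sound hcol _ => r s hr hs hne hcs.
rewrite ltnNge; apply/negP => hle.
have hrL : r < size L by apply: leq_trans hK.
have hsL : s < size L by apply: leq_trans hK.
have hlt : nth 0 (nth [::] (mktbl L K) s) r < 8.
  apply: (leq_ltn_trans hle); rewrite ltnS; apply: leq_trans (leq_trans ha h7).
  by case/andP: (hb (phi ix px k0 (nth d0 L r))).
have hw := tbl_within k0 ixinj pxadj hv hs hsL hrL hlt.
have hneq : phi ix px k0 (nth d0 L s) != phi ix px k0 (nth d0 L r).
  apply/eqP => /(phi_inj ixinj pxne pxadj (nth_valid hv hsL) (nth_valid hv hrL)) hce.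
  have := allP hpw s; rewrite mem_iota add0n hs => /(_ isT) /allP /(_ r).
  by rewrite mem_iota add0n hr eq_sym (negbTE hne) hce => /(_ isT).
by rewrite hcs in hle; apply: (hp _ _ hneq (esym hcs)); apply: within_mono hw hle.
Qed.

Definition L3 : seq cv := [:: ((0,0),(0,0)); ((0,2),(0,2)); ((1,2),(1,2)); ((2,2),(2,2)); ((0,2),(2,0)); ((0,2),(2,1)); ((2,0),(2,0)); ((2,1),(2,1)); ((0,2),(1,0)); ((0,2),(1,1)); ((1,0),(1,0)); ((1,1),(1,1)); ((1,2),(0,0)); ((1,2),(2,0)); ((1,2),(2,1)); ((2,2),(0,0)); ((2,2),(1,0)); ((2,2),(1,1)); ((2,0),(2,1)); ((0,0),(0,1)); ((0,1),(0,1)); ((0,2),(1,2)); ((0,2),(2,2)); ((1,2),(2,2)); ((1,2),(0,1)); ((2,2),(0,1)); ((1,0),(1,1))].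
Definition L4 : seq cv := [:: ((0,0),(0,0)); ((1,2),(1,2)); ((2,2),(2,2)); ((3,2),(3,2)); ((0,1),(0,1)); ((0,0),(0,1)); ((1,2),(0,0)); ((1,2),(0,1)); ((2,2),(0,0)); ((2,2),(0,1)); ((3,2),(0,0)); ((3,2),(0,1)); ((0,2),(0,2)); ((1,0),(1,0)); ((1,1),(1,1)); ((2,0),(2,0)); ((2,1),(2,1)); ((3,0),(3,0)); ((3,1),(3,1)); ((0,2),(1,2)); ((0,2),(2,2)); ((0,2),(3,2)); ((0,2),(1,0)); ((0,2),(1,1)); ((0,2),(2,0)); ((0,2),(2,1)); ((0,2),(3,0)); ((0,2),(3,1)); ((1,2),(2,2)); ((1,2),(3,2)); ((1,2),(2,0)); ((1,2),(2,1)); ((1,2),(3,0)); ((1,2),(3,1)); ((2,2),(3,2)); ((2,2),(1,0)); ((2,2),(1,1)); ((2,2),(3,0)); ((2,2),(3,1)); ((3,2),(1,0)); ((3,2),(1,1)); ((3,2),(2,0)); ((3,2),(2,1)); ((1,0),(1,1)); ((2,0),(2,1)); ((3,0),(3,1))].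
Lemma L3ok : coreok L3 3 20 6. Proof. by vm_compute. Qed.
Lemma L4ok : coreok L4 4 12 7. Proof. by vm_compute. Qed.


Section Main.
Variables (n p m : nat).
Notation B := ('I_n + 'I_n * 'I_p)%type.
Notation E := {e : B * B | @KP_adj n p e.1 e.2 && (enum_rank e.1 < enum_rank e.2)%N}.
Notation T := (B + E * 'I_m)%type.
Notation KPa := (@KP_adj n p).
Notation adj := (@fssd_adj B (@KP_adj n p) m).
Variables (a : nat) (c : T -> nat).
Hypothesis hc : packing_coloring adj a c.
Variables (k0 : 'I_m) (o0 o1 : 'I_p).
Hypothesis ho : o0 != o1.

Lemma pack_lt (x y : T) d : x != y -> c x = c y -> within adj d x y -> d > c x.
Proof.
move=> hne he hw; rewrite ltnNge; apply/negP => hle.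
by case: hc => _ /(_ x y hne he); apply; apply: within_mono hw hle.
Qed.

Lemma col_ge1 x : 1 <= c x <= a.
Proof. by case: hc. Qed.

Definition X1 (i : 'I_n) (d : 'I_n * 'I_3) : B :=
  if (d.2 : nat) == 0 then inl d.1 else if (d.2 : nat) == 1 then inr (d.1, o0) else inr (d.1, o1).

Lemma X1_adj i d : d.1 != i -> KPa (inl i) (X1 i d).
Proof.
by move=> h; rewrite /X1; case: ifP => _; [|case: ifP => _] => /=; rewrite /K_adj eq_sym.
Qed.

Lemma X1_inj i d1 d2 : X1 i d1 = X1 i d2 -> d1 = d2.
Proof.
case: d1 => j1 [t1 h1]; case: d2 => j2 [t2 h2]; rewrite /X1 /=.
have ho' : (o0 == o1) = false by apply/negbTE.
move: h1 h2; case: t1 => [|[|[|t1]]] //; case: t2 => [|[|[|t2]]] //= h1 h2.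
all: try (by case=> ->; congr pair; apply: val_inj).
all: try (by case=> -> ->; congr pair; apply: val_inj).
all: try (by case=> _ e; move: ho'; rewrite e eqxx).

Qed.

Lemma part1 (hn : 3 <= n) (ha : a <= n + 3) i : c (inl (inl i)) <> 1.
Proof.
move=> h1.
pose f d := mk (inl i) (X1 i d) k0.
pose D := [set d : 'I_n * 'I_3 | d.1 != i].
have hD : #|D| = (n - 1) * 3.
  have -> : D = setX [set~ i] [set: 'I_3] by apply/setP => d; rewrite !inE andbT.
  by rewrite cardsX cardsC1 cardsT !card_ord subn1.
have hfadj d : d \in D -> KPa (inl i) (X1 i d) by rewrite inE => /X1_adj.
have hfne d1 d2 : d1 \in D -> d2 \in D -> d1 != d2 -> f d1 != f d2.
  move=> h1' h2' hne; apply/eqP => /(mk_inj (hfadj _ h1') (hfadj _ h2')).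
  case=> [[_ /X1_inj e]|[e _]]; first by rewrite e eqxx in hne.
  move: h2' e; rewrite inE /X1; case: ifP => _; [|case: ifP => _] => // hne' [] e.
  by rewrite e eqxx in hne'.
have hge d : d \in D -> 2 <= c (f d).
  move=> hd; have /andP [b1 _] := col_ge1 (f d).
  case: (c (f d) =P 1) => [e|]; last by case: (c (f d)) b1 => [|[|]].
  have : c (f d) < 1.
    apply: (pack_lt (y := inl (inl i))); first by apply/eqP; apply: mk_inl; exact: hfadj.
      by rewrite e h1.
    by apply: within1; case: (mk_adj1 k0 (hfadj _ hd)).
  by rewrite e.
have := @count_inj _ D (fun d => c (f d)) 2 a.+1.
have hle : #|D| <= a.+1 - 2.
  apply: count_inj.
    move=> d1 d2 h1' h2' he; apply/eqP; apply/negPn/negP => hne.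
    have := pack_lt (hfne _ _ h1' h2' hne) he
       (within_cons (d := 1) (mk_adj1 k0 (hfadj _ h1')).2
          (within1 (mk_adj1 k0 (hfadj _ h2')).1)).
    by rewrite ltnNge (hge _ h1').
  move=> d hd; rewrite hge //= ltnS; by case/andP: (col_ge1 (f d)).
move=> _; rewrite hD in hle; lia.
Qed.


Lemma part2big (hn : 5 <= n) (ha : a <= n + 3) i g : c (inl (inr (i, g))) <> 1.
Proof.
move=> h1.
have hu j : c (inl (inl j)) <> 1 by apply: part1 => //; apply: leq_trans hn.
pose y : B := inr (i, g).
pose f (d : 'I_n * bool) : T := if d.2 then mk y (inl d.1) k0 else inl (inl d.1).
pose D := [set~ (i, true)].
have hD : #|D| = (n * 2).-1 by rewrite cardsC1 card_prod !card_ord card_bool.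
have hya j : j != i -> KPa y (inl j) by rewrite /= /K_adj.
have hDt j : (j, true) \in D -> j != i.
  by rewrite !inE; apply: contra => /eqP ->.
have hfne d1 d2 : d1 \in D -> d2 \in D -> d1 != d2 -> f d1 != f d2.
  case: d1 => j1 [|]; case: d2 => j2 [|] h1' h2' hne; rewrite /f /=; apply/eqP.
  - move/(mk_inj (hya _ (hDt _ h1')) (hya _ (hDt _ h2'))) => [[_ [e]]|[]//].
    by rewrite e eqxx in hne.
  - exact: (mk_inl (hya _ (hDt _ h1'))).
  - by move/esym; apply: (mk_inl (hya _ (hDt _ h2'))).
  - by case=> e; rewrite e eqxx in hne.
have hge d : d \in D -> 2 <= c (f d).
  move=> hd; have /andP [b1 _] := col_ge1 (f d).
  case: (c (f d) =P 1) => [e|]; last by case: (c (f d)) b1 => [|[|]].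
  clear b1; case: d hd e => j [] hd e /=; last by move: e; rewrite /f /= => /hu.
  have hj := hDt _ hd.
  have : c (f (j, true)) < 1.
    apply: (pack_lt (y := inl y)); first by apply/eqP; apply: mk_inl; exact: hya.
      by rewrite e h1.
    by apply: within1; case: (mk_adj1 k0 (hya _ hj)).
  by rewrite e.
have hw d1 d2 : d1 \in D -> d2 \in D -> d1 != d2 -> within adj (2 + (d1.2 != d2.2)) (f d1) (f d2).
  have uu j k : j != k -> within adj 2 (inl (inl j) : T) (inl (inl k)).
    move=> hjk; have hk : KPa (inl j) (inl k) by [].
    exact: within_cons (mk_adj1 k0 hk).1 (within1 (mk_adj2 k0 hk).2).
  have us j k : k != i -> within adj 3 (inl (inl j) : T) (mk y (inl k) k0).
    move=> hk; case: (eqVneq j k) => [->|hjk].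
      by apply: within_mono (within1 (mk_adj2 k0 (hya _ hk)).1) _.
    exact: within_mono (within_rcons (uu _ _ hjk) (mk_adj2 k0 (hya _ hk)).1) _.
  case: d1 => j1 [|]; case: d2 => j2 [|] h1' h2' hne; rewrite /f /=.
  - exact: within_cons (mk_adj1 k0 (hya _ (hDt _ h1'))).2
      (within1 (mk_adj1 k0 (hya _ (hDt _ h2'))).1).
  - by apply: within_sym; apply: us; apply: hDt.
  - by apply: us; apply: hDt.
  - by apply: uu; apply: contra hne => /eqP ->.
pose P := [set d | c (f d) != 2].
have h2 : #|D :&: P| <= a.+1 - 3.
  apply: (@count_inj _ _ (fun d => c (f d))).
    move=> d1 d2; rewrite !in_setI => /andP [hd1 hc1] /andP [hd2 hc2] he.
    rewrite inE in hc1.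
    apply/eqP; apply/negPn/negP => hne.
    have := pack_lt (hfne _ _ hd1 hd2 hne) he (hw _ _ hd1 hd2 hne).
    have := hge _ hd1; move: hc1; case: (d1.2 != d2.2) => /=;
    by case: (c (f d1)) => [|[|[|]]].
  move=> d; rewrite !in_setI => /andP [hd hc1]; rewrite inE in hc1; have := hge _ hd; move: hc1.
  by case/andP: (col_ge1 (f d)) => _; case: (c (f d)) => [|[|[|x]]].
have h3 : #|D :\: P| <= 2 - 0.
  apply: (@count_inj _ _ (fun d => nat_of_bool d.2)).
    move=> d1 d2; rewrite !in_setD => /andP [hc1 hd1] /andP [hc2 hd2] he.
    rewrite inE negbK in hc1; rewrite inE negbK in hc2; move/eqP in hc1; move/eqP in hc2.
    apply/eqP; apply/negPn/negP => hne.
    have := pack_lt (hfne _ _ hd1 hd2 hne) (etrans hc1 (esym hc2)) (hw _ _ hd1 hd2 hne).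
    suff -> : d1.2 = d2.2 by rewrite eqxx hc1.
    by case: (d1.2) (d2.2) he => [] [].
  by move=> d _; case: (d.2).
have := cardsID P D; rewrite hD => hsum.
lia.
Qed.

End Main.


Theorem lemma1 (n p m : nat) (hn : (3 <= n)%N) (hp : (2 <= p)%N) (hm : (1 <= m)%N)
  (a : nat) (ha : (a <= n + 3)%N)
  (c : ('I_n + 'I_n * 'I_p)
       + {e : ('I_n + 'I_n * 'I_p) * ('I_n + 'I_n * 'I_p) |
            KP_adj e.1 e.2 && (enum_rank e.1 < enum_rank e.2)%N} * 'I_m -> nat)
  (hc : packing_coloring (@fssd_adj ('I_n + 'I_n * 'I_p)%type (@KP_adj n p) m) a c) :
  (forall i : 'I_n, c (inl (inl i)) <> 1%N) /\
  (forall (i : 'I_n) (g : 'I_p), c (inl (inr (i, g))) <> 1%N).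
Proof.
have hp0 : 0 < p by apply: leq_trans hp.
pose o0 : 'I_p := Ordinal hp0.
pose o1 : 'I_p := Ordinal hp.
have ho : o0 != o1 by [].
pose k0 : 'I_m := Ordinal hm.
have hu : forall i : 'I_n, c (inl (inl i)) <> 1 by move=> i; exact: (part1 hc k0 ho hn ha).
split => // i g h1.
case: (leqP 5 n) => hn5; first exact: (part2big hc k0 ho hn5 ha h1).
have [g' hgg'] : exists g' : 'I_p, P_adj g g'.
  case: (ltnP g.+1 p) => hg.
    by exists (Ordinal hg); rewrite /P_adj /= eqxx.
  have hg' : g.-1 < p by apply: leq_ltn_trans (leq_pred g) (ltn_ord g).
  exists (Ordinal hg'); rewrite /P_adj /=; apply/orP; right.
  by rewrite prednK // -ltnS; apply: leq_trans hp hg.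
have hPne (x y : 'I_p) : P_adj x y -> x != y.
  by move=> hxy; apply/eqP => e; move: hxy; rewrite e /P_adj orbb; rewrite eqn_leq ltnn.
have hn0 : 0 < n by apply: leq_trans hn.
pose ix (k : nat) : 'I_n := Ordinal (ltn_pmod (i + k) hn0).
pose px (k h : nat) : 'I_p := if k == 0 then (if h == 0 then g else g') else (if h == 0 then o0 else o1).
have pxne k : k < n -> px k 0 != px k 1.
  by move=> _; rewrite /px; case: (k == 0) => //; apply: hPne.
have pxadj k : k < n -> P_adj (px k 0) (px k 1).
  by move=> _; rewrite /px; case: (k == 0).
have ixinj k l : k < n -> l < n -> ix k = ix l -> k = l.
  move=> hk hl /(congr1 val) /= /eqP; rewrite eqn_modDl !modn_small //; exact: eqP.
have ht : c (inl (inr (ix 0, px 0 0))) = 1.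
  have -> : ix 0 = i by apply: val_inj; rewrite /= addn0 modn_small.
  by rewrite /px /=.
have [n3|n4] : n = 3 \/ n = 4 by lia.
- have hk : forall k l, k < 3 -> l < 3 -> ix k = ix l -> k = l.
    by move=> k l hk1 hl; apply: ixinj; rewrite n3.
  have pxne' : forall k, k < 3 -> px k 0 != px k 1 by move=> k hk1; apply: pxne; rewrite n3.
  have pxadj' : forall k, k < 3 -> P_adj (px k 0) (px k 1) by move=> k hk1; apply: pxadj; rewrite n3.
  have ha' : a <= 6 by lia.
  exact: (core_false k0 hk pxne' pxadj' L3ok ha' hc hu ht).
- have hk : forall k l, k < 4 -> l < 4 -> ix k = ix l -> k = l.
    by move=> k l hk1 hl; apply: ixinj; rewrite n4.
  have pxne' : forall k, k < 4 -> px k 0 != px k 1 by move=> k hk1; apply: pxne; rewrite n4.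
  have pxadj' : forall k, k < 4 -> P_adj (px k 0) (px k 1) by move=> k hk1; apply: pxadj; rewrite n4.
  have ha' : a <= 7 by lia.
  exact: (core_false k0 hk pxne' pxadj' L4ok ha' hc hu ht).
Qed.
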